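(* Let $(\Omega,\mathcal F,\mathbb P)$ be a probability space with $\Omega$ compact. Let $\mathfrak G$ (option sellers) and $\mathfrak R$ (option buyers) be finite disjoint index sets, and for each $i\in\mathfrak G\cup\mathfrak R$ let $\pi_i^\omega$ (electricity-market profit) and $p_i^{\omega,*}$ (real-time price faced by $i$) be given square-integrable random variables. Fix $\overline q,\overline K,\overline\Delta>0$ and $\mathcal A_0:=[0,\overline q]\times[0,\overline K]\times[0,\overline\Delta]$. Assume every participant is risk-neutral, i.e. its acceptable set is $$\mathcal A_r=\{(q,K,\Delta)\in\mathcal A_0:\ \mathbb E[\pi_r^\omega-q\Delta+(p_r^{\omega,*}-K)^+\Delta]\ge\mathbb E[\pi_r^\omega]\}\quad (r\in\mathfrak R),$$ $$\mathcal A_g=\{(q,K,\Delta)\in\mathcal A_0:\ \mathbb E[\pi_g^\omega+q\Delta-(p_g^{\omega,*}-K)^+\Delta]\ge\mathbb E[\pi_g^\omega]\}\quad (g\in\mathfrak G).$$ Consider the problem of maximizing $\mathbb E[\mathsf{MS}^\omega]$, where $$\mathsf{MS}^\omega:=\sum_{r\in\mathfrak R}q_r\Delta_r-\sum_{g\in\mathfrak G}q_g\Delta_g-\sum_{r\in\mathfrak R}(p_r^{\omega,*}-K_r)^+\Delta_r+\sum_{g\in\mathfrak G}(p_g^{\omega,*}-K_g)^+\delta_g^\omega,$$ over $(q_i,K_i,\Delta_i)\in\mathbb R_+^3$ for all $i\in\mathfrak G\cup\mathfrak R$ and $\mathcal F$-measurable $\delta_g:\Omega\to[0,\Delta_g]$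 in $\mathcal L_2(\Omega)$ for $g\in\mathfrak G$, subject to $\sum_{g}\Delta_g=\sum_r\Delta_r$, $(q_i,K_i,\Delta_i)\in\mathcal A_i$ for all $i$, and, $\mathbb P$-almost surely, $\delta_g^\omega\in[0,\Delta_g]$ for all $g$ and $\sum_{g\in\mathfrak G}\delta_g^\omega=\sum_{r\in\mathfrak R}\Delta_r\mathbf 1\{p_r^{\omega,*}\ge K_r\}$. Then the optimal value of this problem is $0$; that is, $\mathbb E[\mathsf{MS}^{\omega,*}]=0$ at an optimal solution.
   Context: $z^+:=\max\{z,0\}$ and $\mathbf 1\{\cdot\}$ is the indicator of an event. $\mathsf{MS}^\omega$ is the merchandising surplus of a profit-maximizing market maker that buys cash-settled call options (option price $q$, strike $K$, quantity $\Delta$; payoff $(p-K)^+$ per unit at real-time price $p$) from sellers $g$ and sells them to buyers $r$, with $\delta_g^\omega$ the amount of cashable options allocated to seller $g$ in scenario $\omega$. *)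

(* Defs.v *)
From mathcomp Require Import all_boot all_order all_algebra.
From mathcomp Require Import all_classical all_reals all_analysis.
Set Implicit Arguments. Unset Strict Implicit. Unset Printing Implicit Defensive.
Import Order.TTheory GRing.Theory Num.Theory.
Local Open Scope ring_scope.
Local Open Scope classical_set_scope.

Definition posp {R : realType} (z : R) : R := Num.max z 0.

Definition sq_integrable {R : realType} {d : measure_display} {Omega : measurableType d}
  (P : probability Omega R) (f : Omega -> R) : Prop :=
  measurable_fun setT f /\ P.-integrable setT (fun w => ((f w) ^+ 2)%:E).

Definition inA0 {R : realType} (qbar Kbar Dbar q K D : R) : Prop :=
  0 <= q <= qbar /\ 0 <= K <= Kbar /\ 0 <= D <= Dbar.

Definition acc_buyer {R : realType} {d : measure_display} {Omega : measurableType d}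
  (P : probability Omega R) (qbar Kbar Dbar : R) (pi p : Omega -> R) (q K D : R) : Prop :=
  inA0 qbar Kbar Dbar q K D /\
  (\int[P]_w ((pi w - q * D + posp (p w - K) * D)%:E) >= \int[P]_w ((pi w)%:E))%E.

Definition acc_seller {R : realType} {d : measure_display} {Omega : measurableType d}
  (P : probability Omega R) (qbar Kbar Dbar : R) (pi p : Omega -> R) (q K D : R) : Prop :=
  inA0 qbar Kbar Dbar q K D /\
  (\int[P]_w ((pi w + q * D - posp (p w - K) * D)%:E) >= \int[P]_w ((pi w)%:E))%E.

Definition MS {R : realType} {Omega : Type} {G Rr : finType}
  (pg : G -> Omega -> R) (pr : Rr -> Omega -> R)
  (qg Kg Dg : G -> R) (qr Kr Dr : Rr -> R) (delta : G -> Omega -> R) (w : Omega) : R :=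
  \sum_(r : Rr) qr r * Dr r - \sum_(g : G) qg g * Dg g
  - \sum_(r : Rr) posp (pr r w - Kr r) * Dr r
  + \sum_(g : G) posp (pg g w - Kg g) * delta g w.

Definition feasible {R : realType} {d : measure_display} {Omega : measurableType d}
  {G Rr : finType} (P : probability Omega R) (qbar Kbar Dbar : R)
  (pig pg : G -> Omega -> R) (pir pr : Rr -> Omega -> R)
  (qg Kg Dg : G -> R) (qr Kr Dr : Rr -> R) (delta : G -> Omega -> R) : Prop :=
  (forall g, 0 <= qg g /\ 0 <= Kg g /\ 0 <= Dg g) /\
      (forall r, 0 <= qr r /\ 0 <= Kr r /\ 0 <= Dr r) /\
      (forall g, sq_integrable P (delta g) /\ (forall w, 0 <= delta g w <= Dg g)) /\
      \sum_(g : G) Dg g = \sum_(r : Rr) Dr r /\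
      (forall r, acc_buyer P qbar Kbar Dbar (pir r) (pr r) (qr r) (Kr r) (Dr r)) /\
      (forall g, acc_seller P qbar Kbar Dbar (pig g) (pg g) (qg g) (Kg g) (Dg g)) /\
      {ae P, forall w, (forall g, (0 <= delta g w <= Dg g)%R) /\
         (\sum_(g : G) delta g w = \sum_(r : Rr) Dr r * ((Kr r <= pr r w)%R : bool)%:R)%R}.

Definition EMS {R : realType} {d : measure_display} {Omega : measurableType d}
  {G Rr : finType} (P : probability Omega R)
  (pg : G -> Omega -> R) (pr : Rr -> Omega -> R)
  (qg Kg Dg : G -> R) (qr Kr Dr : Rr -> R) (delta : G -> Omega -> R) : \bar R :=
  (\int[P]_w (MS pg pr qg Kg Dg qr Kr Dr delta w)%:E)%E.

(* Main.v *)
Require Import Defs.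
From mathcomp Require Import all_boot all_order all_algebra.
From mathcomp Require Import all_classical all_reals all_analysis.
From mathcomp Require Import ring lra.
Import Order.TTheory GRing.Theory Num.Theory.
Local Open Scope ring_scope.

Definition rint {R : realType} {d : measure_display} {Omega : measurableType d}
  (P : probability Omega R) (f : Omega -> R) := P.-integrable setT (EFin \o f).

Lemma rint_meas {R : realType} {d : measure_display} {Omega : measurableType d}
  {P : probability Omega R} (f : Omega -> R) : rint P f -> measurable_fun setT f.
Proof. by move=> /measurable_int/measurable_realfun.measurable_EFinP. Qed.

Lemma rintD {R : realType} {d : measure_display} {Omega : measurableType d}
  {P : probability Omega R} (f : Omega -> R) g : rint P f -> rint P g -> rint P (fun w => f w + g w).
Proof.
move=> hf hg; have := integrableD measurableT hf hg.
by congr (_.-integrable _ _); apply/funext => x; rewrite /= EFinD.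
Qed.

Lemma rintN {R : realType} {d : measure_display} {Omega : measurableType d}
  {P : probability Omega R} (f : Omega -> R) : rint P f -> rint P (fun w => - f w).
Proof.
move=> hf; have := integrableN hf.
by congr (_.-integrable _ _); apply/funext => x; rewrite /= EFinN.
Qed.

Lemma rintB {R : realType} {d : measure_display} {Omega : measurableType d}
  {P : probability Omega R} (f : Omega -> R) g : rint P f -> rint P g -> rint P (fun w => f w - g w).
Proof. by move=> hf hg; apply: rintD => //; apply: rintN. Qed.

Lemma rintZ {R : realType} {d : measure_display} {Omega : measurableType d}
  {P : probability Omega R} (f : Omega -> R) (c : R) : rint P f -> rint P (fun w => f w * c).
Proof.
move=> hf; have := integrableZl measurableT c hf.
by congr (_.-integrable _ _); apply/funext => x; rewrite /= -EFinM mulrC.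
Qed.

Lemma rint_cst {R : realType} {d : measure_display} {Omega : measurableType d}
  (P : probability Omega R) (c : R) : rint P (fun _ => c).
Proof. exact: (finite_measure_integrable_cst P c measurableT). Qed.

Lemma rint_sum {R : realType} {d : measure_display} {Omega : measurableType d}
  {P : probability Omega R} (I : finType) (f : I -> Omega -> R) :
  (forall i, rint P (f i)) -> rint P (fun w => \sum_(i : I) f i w).
Proof.
move=> hf; have := integrable_sum measurableT (index_enum I) (P := predT)
   (h := fun i w => (f i w)%:E) (fun i _ => hf i).
by congr (_.-integrable _ _); apply/funext => x; rewrite /= sumEFin.
Qed.

Lemma rint_le {R : realType} {d : measure_display} {Omega : measurableType d}
  {P : probability Omega R} (f g : Omega -> R) : measurable_fun setT f -> rint P g ->
  (forall w, `|f w| <= `|g w|) -> rint P f.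
Proof.
move=> mf hg hle; apply: (le_integrable measurableT _ _ hg).
  exact/measurable_realfun.measurable_EFinP.
by move=> x _ /=; rewrite lee_fin.
Qed.

Lemma rint_sq {R : realType} {d : measure_display} {Omega : measurableType d}
  {P : probability Omega R} (f : Omega -> R) : sq_integrable P f -> rint P f.
Proof.
move=> [mf hf]; apply: (@rint_le _ _ _ P f (fun w => 1 + f w ^+ 2)) => //.
  exact: rintD _ _ (rint_cst _ _) hf.
move=> w; rewrite (@ger0_norm _ (1 + _)); last by rewrite addr_ge0 // sqr_ge0.
have [hx|hx] := leP 0 (f w).
  by rewrite ger0_norm //; nra.
by rewrite ltr0_norm //; nra.
Qed.

Lemma posp_ge0 {R : realType} (z : R) : 0 <= posp z.
Proof. by rewrite /posp le_max lexx orbT. Qed.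

Lemma rint_posp {R : realType} {d : measure_display} {Omega : measurableType d}
  {P : probability Omega R} (f : Omega -> R) (K : R) : rint P f -> rint P (fun w => posp (f w - K)).
Proof.
move=> hf; have hg := rintB _ _ hf (rint_cst P K).
apply: (rint_le _ _ _ hg).
  have := measurable_realfun.measurable_maxr (rint_meas _ hg)
     (measurable_cst (0 : R)).
  by congr measurable_fun.
move=> w; rewrite /posp; set z := f w - K.
have [hz|hz] := leP 0 z.
  by [].
by rewrite normr0.
Qed.
Lemma intD {R : realType} {d : measure_display} {Omega : measurableType d}
  (P : probability Omega R) (f g : Omega -> R) : rint P f -> rint P g ->
  (\int[P]_w (f w + g w)%:E = \int[P]_w (f w)%:E + \int[P]_w (g w)%:E)%E.
Proof.
move=> hf hg; rewrite -(integralD measurableT hf hg).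
by apply: eq_integral => w _; rewrite EFinD.
Qed.

Lemma int_sum {R : realType} {d : measure_display} {Omega : measurableType d}
  (P : probability Omega R) (I : finType) (f : I -> Omega -> R) :
  (forall i, rint P (f i)) ->
  (\int[P]_w (\sum_(i : I) f i w)%:E = \sum_(i : I) \int[P]_w (f i w)%:E)%E.
Proof.
move=> hf; rewrite -(integral_sum measurableT (f := fun i w => (f i w)%:E) hf).
by apply: eq_integral => w _; rewrite sumEFin.
Qed.

Lemma acc_b {R : realType} {d : measure_display} {Omega : measurableType d}
  (P : probability Omega R) qbar Kbar Dbar (pi p : Omega -> R) q K D :
  rint P pi -> rint P p -> acc_buyer P qbar Kbar Dbar pi p q K D ->
  (0 <= \int[P]_w (posp (p w - K) * D - q * D)%:E)%E.
Proof.
move=> hpi hp [_ h].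
have hh : rint P (fun w => posp (p w - K) * D - q * D).
  exact: rintB _ _ (rintZ _ D (rint_posp _ K hp)) (rint_cst P (q * D)).
move: h; rewrite [X in (_ <= X)%E](eq_integral (fun w => (pi w + (posp (p w - K) * D - q * D))%:E)); last first.
  by move=> w _; congr EFin; ring.
rewrite intD // => h; rewrite -(leeD2lE 0 _ (integrable_fin_num measurableT hpi)) adde0.
by [].
Qed.

Lemma acc_s {R : realType} {d : measure_display} {Omega : measurableType d}
  (P : probability Omega R) qbar Kbar Dbar (pi p : Omega -> R) q K D :
  rint P pi -> rint P p -> acc_seller P qbar Kbar Dbar pi p q K D ->
  (0 <= \int[P]_w (q * D - posp (p w - K) * D)%:E)%E.
Proof.
move=> hpi hp [_ h].
have hh : rint P (fun w => q * D - posp (p w - K) * D).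
  exact: rintB _ _ (rint_cst P (q * D)) (rintZ _ D (rint_posp _ K hp)).
move: h; rewrite [X in (_ <= X)%E](eq_integral (fun w => (pi w + (q * D - posp (p w - K) * D))%:E)); last first.
  by move=> w _; congr EFin; ring.
rewrite intD // => h; rewrite -(leeD2lE 0 _ (integrable_fin_num measurableT hpi)) adde0.
by [].
Qed.

Theorem proposition2 (R : realType) (d : measure_display) (Omega : measurableType d)
  (P : probability Omega R) (G Rr : finType)
  (pig pg : G -> Omega -> R) (pir pr : Rr -> Omega -> R)
  (hpig : forall g, sq_integrable P (pig g)) (hpg : forall g, sq_integrable P (pg g))
  (hpir : forall r, sq_integrable P (pir r)) (hpr : forall r, sq_integrable P (pr r))
  (qbar Kbar Dbar : R) (hq : 0 < qbar) (hK : 0 < Kbar) (hD : 0 < Dbar) :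
  (exists (qg Kg Dg : G -> R) (qr Kr Dr : Rr -> R) (delta : G -> Omega -> R),
      feasible P qbar Kbar Dbar pig pg pir pr qg Kg Dg qr Kr Dr delta /\
      EMS P pg pr qg Kg Dg qr Kr Dr delta = 0%E) /\
  (forall (qg Kg Dg : G -> R) (qr Kr Dr : Rr -> R) (delta : G -> Omega -> R),
      feasible P qbar Kbar Dbar pig pg pir pr qg Kg Dg qr Kr Dr delta ->
      (EMS P pg pr qg Kg Dg qr Kr Dr delta <= 0)%E).
Proof.
split.
  have hA : inA0 qbar Kbar Dbar 0 0 0.
    by split; [|split]; rewrite lexx /= ltW.
  exists (fun _ => 0), (fun _ => 0), (fun _ => 0), (fun _ => 0), (fun _ => 0),
    (fun _ => 0), (fun _ _ => 0); split.
    split; first by move=> g; rewrite lexx.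
    split; first by move=> r; rewrite lexx.
    split.
      move=> g; split; last by move=> w; rewrite lexx.
      split; first exact: measurable_cst.
      have -> : (fun w : Omega => ((fun _ : Omega => (0:R)) w ^+ 2)%:E) = cst 0%E.
        by apply/funext => w; rewrite /= expr2 mulr0.
      exact: integrable0.
    split; first by rewrite !big1.
    split.
      move=> r; split => //.
      rewrite [X in (_ <= X)%E](eq_integral (fun w => (pir r w)%:E)) //.
      by move=> w _; rewrite !mulr0 subr0 addr0.
    split.
      move=> g; split => //.
      rewrite [X in (_ <= X)%E](eq_integral (fun w => (pig g w)%:E)) //.
      by move=> w _; rewrite !mulr0 subr0 addr0.
    apply: aeW => w; split; first by move=> g; rewrite lexx.
    by rewrite !big1 // => r _; rewrite mul0r.
  rewrite /EMS (eq_integral (cst 0%E)) ?integral0 // => w _.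
  by rewrite /MS !big1 // ?subr0 ?addr0 // => i _; rewrite mulr0.
move=> qg Kg Dg qr Kr Dr delta [hg [hr [hdel [_ [hb [hs _]]]]]].
pose hR := fun r w => posp (pr r w - Kr r) * Dr r - qr r * Dr r.
pose kG := fun g w => qg g * Dg g - posp (pg g w - Kg g) * Dg g.
have ihR : forall r, rint P (hR r).
  move=> r; apply: rintB; last exact: rint_cst.
  by apply: rintZ; apply: rint_posp; apply: rint_sq.
have ikG : forall g, rint P (kG g).
  move=> g; apply: rintB; first exact: rint_cst.
  by apply: rintZ; apply: rint_posp; apply: rint_sq.
have iMS : rint P (MS pg pr qg Kg Dg qr Kr Dr delta).
  rewrite /MS; apply: rintD.
    apply: rintB; first exact: rint_cst.
    by apply: rint_sum => r; apply: rintZ; apply: rint_posp; apply: rint_sq.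
  apply: rint_sum => g.
  have ip : rint P (fun w => posp (pg g w - Kg g)) by apply: rint_posp; apply: rint_sq.
  apply: (rint_le _ (fun w => posp (pg g w - Kg g) * Dg g)).
  - have := measurable_realfun.measurable_funM (rint_meas _ ip) (hdel g).1.1.
    by congr measurable_fun.
  - exact: rintZ.
  - move=> w; rewrite !normrM ler_wpM2l //.
    have [h0 h1] := andP ((hdel g).2 w).
    by rewrite !ger0_norm // (le_trans h0 h1).
have iS : rint P (fun w => \sum_r hR r w + \sum_g kG g w).
  by apply: rintD; apply: rint_sum.
have key : (\int[P]_w (MS pg pr qg Kg Dg qr Kr Dr delta w
               + (\sum_r hR r w + \sum_g kG g w))%:E <= 0)%E.
  rewrite -(integral0 P setT); apply: le_integral => //.
    exact: rintD.
    exact: integrable0.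
  move=> w _; rewrite /= lee_fin /MS /hR /kG !sumrB.
  have : \sum_g posp (pg g w - Kg g) * delta g w <= \sum_g posp (pg g w - Kg g) * Dg g.
    apply: ler_sum => g _; rewrite ler_wpM2l ?posp_ge0 //.
    by have /andP[] := (hdel g).2 w.
  lra.
rewrite intD // in key.
have bge0 : (0 <= \int[P]_w (\sum_r hR r w + \sum_g kG g w)%:E)%E.
  rewrite intD //; last by apply: rint_sum.
  all: try (by apply: rint_sum).
  rewrite !int_sum //; apply: adde_ge0; apply: sume_ge0 => i _.
    by apply: (acc_b _ qbar Kbar Dbar (pir i)); [apply: rint_sq..|apply: hb].
  by apply: (acc_s _ qbar Kbar Dbar (pig i)); [apply: rint_sq..|apply: hs].
rewrite /EMS; exact: le_trans (leeDl _ bge0) key.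
Qed.
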